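(* Let $\triangle ABC$ be a nondegenerate triangle circumscribed about a central conic with semi-axes $a$ and $b$, $a$ being the semi-axis along the focal axis, one of whose foci coincides with the circumcenter of $\triangle ABC$. Let $H$ be the orthocenter of $\triangle ABC$. Then $|AH|\,|BH|\,|CH|=8ab^2$.
   Context: A central conic is a non-degenerate ellipse or hyperbola. For a hyperbola, $a$ is the semi-transverse axis and $b$ the semi-conjugate axis, so that $a^2+b^2=c^2$ with $c$ half the focal distance. A triangle is circumscribed about a conic if each of its three sidelines is tangent to the conic. *)

(* Defs.v *)
From Stdlib Require Import Reals.
Open Scope R_scope.

Definition pt := (R * R)%type.
Definition vsub (P Q : pt) : pt := (fst P - fst Q, snd P - snd Q).
Definition vadd (P Q : pt) : pt := (fst P + fst Q, snd P + snd Q).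
Definition vscale (t : R) (P : pt) : pt := (t * fst P, t * snd P).
Definition dot (P Q : pt) : R := fst P * fst Q + snd P * snd Q.
Definition cross (P Q : pt) : R := fst P * snd Q - snd P * fst Q.
Definition perp (u : pt) : pt := (- snd u, fst u).
Definition pdist (P Q : pt) : R := sqrt (dot (vsub P Q) (vsub P Q)).

Definition nondegenerate (A B C : pt) : Prop := cross (vsub B A) (vsub C A) <> 0.

(* A central conic, given by: kind e (true = ellipse, false = hyperbola),
   center O, unit vector u along the focal axis, semi-axes a (along the
   focal axis) and b.  In the frame (O; u, perp u) its equation is
   x^2/a^2 + y^2/b^2 = 1 (ellipse) or x^2/a^2 - y^2/b^2 = 1 (hyperbola). *)
Definition central_conic (e : bool) (O u : pt) (a b : R) : Prop :=
  0 < a /\ 0 < b /\ dot u u = 1 /\ (e = true -> b <= a).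

Definition sgn (e : bool) : R := if e then 1 else -1.

Definition lx (O u X : pt) : R := dot (vsub X O) u.
Definition ly (O u X : pt) : R := dot (vsub X O) (perp u).

Definition on_conic (e : bool) (O u : pt) (a b : R) (X : pt) : Prop :=
  (lx O u X) ^ 2 / a ^ 2 + sgn e * (ly O u X) ^ 2 / b ^ 2 = 1.

Definition focal_c (e : bool) (a b : R) : R :=
  sqrt (if e then a ^ 2 - b ^ 2 else a ^ 2 + b ^ 2).

Definition is_focus (e : bool) (O u : pt) (a b : R) (F : pt) : Prop :=
  F = vadd O (vscale (focal_c e a b) u) \/ F = vadd O (vscale (- focal_c e a b) u).

Definition on_line (P Q X : pt) : Prop := exists t : R, X = vadd P (vscale t (vsub Q P)).

(* The line PQ (P <> Q) is tangent to the conic: it passes through a point X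
   of the conic at which the direction Q - P is orthogonal to the gradient
   of the defining quadratic function. *)
Definition tangent_line (e : bool) (O u : pt) (a b : R) (P Q : pt) : Prop :=
  P <> Q /\
  exists X : pt, on_line P Q X /\ on_conic e O u a b X /\
    (lx O u X / a ^ 2) * dot (vsub Q P) u
    + sgn e * (ly O u X / b ^ 2) * dot (vsub Q P) (perp u) = 0.

Definition circumscribed (e : bool) (O u : pt) (a b : R) (A B C : pt) : Prop :=
  tangent_line e O u a b A B /\ tangent_line e O u a b B C /\
  tangent_line e O u a b C A.

Definition is_circumcenter (A B C X : pt) : Prop :=
  pdist X A = pdist X B /\ pdist X B = pdist X C.

Definition is_orthocenter (A B C H : pt) : Prop :=
  dot (vsub H A) (vsub B C) = 0 /\ dot (vsub H B) (vsub C A) = 0 /\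
  dot (vsub H C) (vsub A B) = 0.

(* Main.v *)
Require Import Defs.
From Stdlib Require Import Reals Lra Lia Psatz.
Open Scope R_scope.
Definition tang (s a b xp yp xq yq : R) : Prop :=
  ~ (xp = xq /\ yp = yq) /\
  exists t x0 y0, x0 = xp + t * (xq - xp) /\ y0 = yp + t * (yq - yp) /\
    x0 ^ 2 / a ^ 2 + s * y0 ^ 2 / b ^ 2 = 1 /\
    x0 / a ^ 2 * (xq - xp) + s * (y0 / b ^ 2) * (yq - yp) = 0.

Lemma perp_zero (d1 d2 v1 v2 w1 w2 : R) :
  d1 * v1 + d2 * v2 = 0 -> d1 * w1 + d2 * w2 = 0 -> v1 * w2 - v2 * w1 <> 0 ->
  d1 = 0 /\ d2 = 0.
Proof.
  intros H1 H2 H3.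
  assert (E1 : d1 * (v1 * w2 - v2 * w1) = 0).
  { replace (d1 * (v1 * w2 - v2 * w1)) with ((d1 * v1 + d2 * v2) * w2 - (d1 * w1 + d2 * w2) * v2) by ring.
    rewrite H1, H2; ring. }
  assert (E2 : d2 * (v1 * w2 - v2 * w1) = 0).
  { replace (d2 * (v1 * w2 - v2 * w1)) with ((d1 * w1 + d2 * w2) * v1 - (d1 * v1 + d2 * v2) * w1) by ring.
    rewrite H1, H2; ring. }
  split; [apply Rmult_integral in E1 | apply Rmult_integral in E2]; tauto.
Qed.

Lemma mid_circle (s a b f xp yp xq yq : R) :
  (s = 1 \/ s = -1) -> 0 < a -> 0 < b -> f ^ 2 = a ^ 2 - s * b ^ 2 ->
  tang s a b xp yp xq yq ->
  (f - xp) ^ 2 + yp ^ 2 = (f - xq) ^ 2 + yq ^ 2 ->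
  ((xp + xq) / 2) ^ 2 + ((yp + yq) / 2) ^ 2 = a ^ 2.
Proof.
  intros Hs Ha Hb Hf [Hne [t [x0 [y0 [Ex [Ey [Hc Hg]]]]]]] Heq.
  set (g1 := x0 / a ^ 2). set (g2 := s * y0 / b ^ 2).
  set (d1 := xq - xp). set (d2 := yq - yp).
  set (m1 := (xp + xq) / 2). set (m2 := (yp + yq) / 2).
  set (w1 := m1 - f). set (w2 := m2).
  assert (Ha2 : a ^ 2 <> 0) by (apply pow_nonzero; lra).
  assert (Hb2 : b ^ 2 <> 0) by (apply pow_nonzero; lra).
  assert (Gd : g1 * d1 + g2 * d2 = 0).
  { unfold g1, g2, d1, d2. rewrite <- Hg. unfold Rdiv; ring. }
  assert (GX : g1 * x0 + g2 * y0 = 1).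
  { unfold g1, g2. rewrite <- Hc. field; lra. }
  assert (GM : g1 * m1 + g2 * m2 = 1).
  { rewrite <- GX. unfold m1, m2. rewrite Ex, Ey.
    replace (g1 * (xp + t * (xq - xp)) + g2 * (yp + t * (yq - yp)))
      with (g1 * ((xp + xq) / 2) + g2 * ((yp + yq) / 2) + (t - 1/2) * (g1 * d1 + g2 * d2))
      by (unfold d1, d2; field).
    rewrite Gd. ring. }
  assert (Wd : w1 * d1 + w2 * d2 = 0).
  { unfold w1, w2, m1, m2, d1, d2. nra. }
  assert (Cr : w1 * g2 - w2 * g1 = 0).
  { assert (Hd : d1 <> 0 \/ d2 <> 0).
    { unfold d1, d2. destruct (Req_dec xp xq); destruct (Req_dec yp yq); try tauto; [right|left|left]; lra. }
    assert (K1 : (w1 * g2 - w2 * g1) * d1 = 0).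
    { replace ((w1 * g2 - w2 * g1) * d1) with (g2 * (w1 * d1 + w2 * d2) - w2 * (g1 * d1 + g2 * d2)) by ring.
      rewrite Wd, Gd; ring. }
    assert (K2 : (w1 * g2 - w2 * g1) * d2 = 0).
    { replace ((w1 * g2 - w2 * g1) * d2) with (w1 * (g1 * d1 + g2 * d2) - g1 * (w1 * d1 + w2 * d2)) by ring.
      rewrite Wd, Gd; ring. }
    destruct Hd as [Hd|Hd]; [apply Rmult_integral in K1 | apply Rmult_integral in K2]; tauto. }
  assert (Key : (g1 ^ 2 + g2 ^ 2) * (a ^ 2 - f ^ 2) = 1 - (f * g1) ^ 2).
  { assert (Z : (g1 ^ 2 + g2 ^ 2) * (a ^ 2 - f ^ 2) - (1 - (f * g1) ^ 2)
              = x0 ^ 2 / a ^ 2 + s * y0 ^ 2 / b ^ 2 - 1).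
    { replace ((f * g1) ^ 2) with (f ^ 2 * g1 ^ 2) by ring. rewrite Hf. unfold g1, g2.
      destruct Hs as [Hs|Hs]; subst s; field; lra. }
    rewrite Hc in Z. lra. }
  assert (WG : g1 * w1 + g2 * w2 = 1 - f * g1).
  { unfold w1, w2. rewrite <- GM. ring. }
  assert (L1 : (g1 ^ 2 + g2 ^ 2) * (w1 ^ 2 + w2 ^ 2) = (1 - f * g1) ^ 2).
  { rewrite <- WG. replace ((g1 ^ 2 + g2 ^ 2) * (w1 ^ 2 + w2 ^ 2)) with
      ((g1 * w1 + g2 * w2) ^ 2 + (w1 * g2 - w2 * g1) ^ 2) by ring. rewrite Cr. ring. }
  assert (L2 : (g1 ^ 2 + g2 ^ 2) * w1 = g1 * (1 - f * g1)).
  { rewrite <- WG. replace ((g1 ^ 2 + g2 ^ 2) * w1) with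
      (g1 * (g1 * w1 + g2 * w2) + g2 * (w1 * g2 - w2 * g1)) by ring. rewrite Cr. ring. }
  assert (Gpos : 0 < g1 ^ 2 + g2 ^ 2).
  { destruct (Req_dec g1 0) as [E|E].
    - assert (g2 <> 0) by (intro E2; rewrite E, E2 in GX; lra).
      assert (0 < g2 * g2) by (apply Rsqr_pos_lt; auto). nra.
    - assert (0 < g1 * g1) by (apply Rsqr_pos_lt; auto). nra. }
  assert (M1 : m1 = f + w1) by (unfold w1; ring).
  assert (Fin : (g1 ^ 2 + g2 ^ 2) * (m1 ^ 2 + m2 ^ 2 - a ^ 2) = 0).
  { rewrite M1. fold w2.
    replace ((g1 ^ 2 + g2 ^ 2) * ((f + w1) ^ 2 + w2 ^ 2 - a ^ 2)) with
      ((g1 ^ 2 + g2 ^ 2) * (w1 ^ 2 + w2 ^ 2) + 2 * f * ((g1 ^ 2 + g2 ^ 2) * w1)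
       - (g1 ^ 2 + g2 ^ 2) * (a ^ 2 - f ^ 2)) by ring.
    rewrite L1, L2, Key. ring. }
  apply Rmult_integral in Fin. destruct Fin as [Fin|Fin]; [lra|]. apply Rminus_diag_uniq; exact Fin.
Qed.
Lemma final_id (m11 m12 m21 m22 m31 m32 r : R) :
  m11 ^ 2 + m12 ^ 2 = r -> m21 ^ 2 + m22 ^ 2 = r -> m31 ^ 2 + m32 ^ 2 = r ->
  (4 * ((m21 + m31) ^ 2 + (m22 + m32) ^ 2)) * (4 * ((m11 + m31) ^ 2 + (m12 + m32) ^ 2))
  * (4 * ((m11 + m21) ^ 2 + (m12 + m22) ^ 2))
  = 64 * r * (r - ((m11 + m21 + m31) ^ 2 + (m12 + m22 + m32) ^ 2)) ^ 2.
Proof.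
  intros H1 H2 H3.
  assert (G : (m11 ^ 2 + m12 ^ 2) * (m21 ^ 2 + m22 ^ 2) * (m31 ^ 2 + m32 ^ 2)
     + 2 * (m11 * m21 + m12 * m22) * (m11 * m31 + m12 * m32) * (m21 * m31 + m22 * m32)
     - (m11 ^ 2 + m12 ^ 2) * (m21 * m31 + m22 * m32) ^ 2
     - (m21 ^ 2 + m22 ^ 2) * (m11 * m31 + m12 * m32) ^ 2
     - (m31 ^ 2 + m32 ^ 2) * (m11 * m21 + m12 * m22) ^ 2 = 0) by ring.
  rewrite H1, H2, H3 in G.
  set (x12 := m11 * m21 + m12 * m22) in *.
  set (x13 := m11 * m31 + m12 * m32) in *.
  set (x23 := m21 * m31 + m22 * m32) in *.
  replace ((m21 + m31) ^ 2 + (m22 + m32) ^ 2) with ((m21 ^ 2 + m22 ^ 2) + (m31 ^ 2 + m32 ^ 2) + 2 * x23) by (unfold x23; ring).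
  replace ((m11 + m31) ^ 2 + (m12 + m32) ^ 2) with ((m11 ^ 2 + m12 ^ 2) + (m31 ^ 2 + m32 ^ 2) + 2 * x13) by (unfold x13; ring).
  replace ((m11 + m21) ^ 2 + (m12 + m22) ^ 2) with ((m11 ^ 2 + m12 ^ 2) + (m21 ^ 2 + m22 ^ 2) + 2 * x12) by (unfold x12; ring).
  replace ((m11 + m21 + m31) ^ 2 + (m12 + m22 + m32) ^ 2) with
    ((m11 ^ 2 + m12 ^ 2) + (m21 ^ 2 + m22 ^ 2) + (m31 ^ 2 + m32 ^ 2) + 2 * (x12 + x13 + x23)) by (unfold x12, x13, x23; ring).
  rewrite H1, H2, H3.
  clearbody x12 x13 x23.
  nra.
Qed.

Lemma core (s a b f xa ya xb yb xc yc xh yh : R) :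
  (s = 1 \/ s = -1) -> 0 < a -> 0 < b -> f ^ 2 = a ^ 2 - s * b ^ 2 ->
  tang s a b xa ya xb yb -> tang s a b xb yb xc yc -> tang s a b xc yc xa ya ->
  (xb - xa) * (yc - ya) - (yb - ya) * (xc - xa) <> 0 ->
  (f - xa) ^ 2 + (0 - ya) ^ 2 = (f - xb) ^ 2 + (0 - yb) ^ 2 ->
  (f - xb) ^ 2 + (0 - yb) ^ 2 = (f - xc) ^ 2 + (0 - yc) ^ 2 ->
  (xh - xa) * (xb - xc) + (yh - ya) * (yb - yc) = 0 ->
  (xh - xb) * (xc - xa) + (yh - yb) * (yc - ya) = 0 ->
  ((xa - xh) ^ 2 + (ya - yh) ^ 2) * ((xb - xh) ^ 2 + (yb - yh) ^ 2)
    * ((xc - xh) ^ 2 + (yc - yh) ^ 2) = 64 * a ^ 2 * b ^ 4.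
Proof.
  intros Hs Ha Hb Hf TAB TBC TCA Hnd EAB EBC OA OB.
  assert (MA := mid_circle s a b f xb yb xc yc Hs Ha Hb Hf TBC ltac:(lra)).
  assert (MB := mid_circle s a b f xc yc xa ya Hs Ha Hb Hf TCA ltac:(lra)).
  assert (MC := mid_circle s a b f xa ya xb yb Hs Ha Hb Hf TAB ltac:(lra)).
  assert (Hnd2 : (xc - xb) * (ya - yc) - (yc - yb) * (xa - xc) <> 0).
  { intro E; apply Hnd. rewrite <- E. ring. }
  assert (D : f - (xa + xb + xc) = 0 /\ 0 - (ya + yb + yc) = 0).
  { apply (perp_zero _ _ (xc - xb) (yc - yb) (xa - xc) (ya - yc)); [nra | nra | exact Hnd2]. }
  destruct D as [D1 D2].
  assert (Hnd3 : (xb - xc) * (yc - ya) - (yb - yc) * (xc - xa) <> 0).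
  { intro E; apply Hnd. rewrite <- E. ring. }
  assert (E : xh - (- f) = 0 /\ yh - 0 = 0).
  { apply (perp_zero _ _ (xb - xc) (yb - yc) (xc - xa) (yc - ya)); [ | | exact Hnd3].
    - replace f with (xa + xb + xc) in * by lra. nra.
    - replace f with (xa + xb + xc) in * by lra. nra. }
  destruct E as [E1 E2].
  replace xh with (- f) by lra. replace yh with 0 by lra.
  assert (FI := final_id ((xb + xc) / 2) ((yb + yc) / 2) ((xc + xa) / 2) ((yc + ya) / 2)
                 ((xa + xb) / 2) ((ya + yb) / 2) (a ^ 2) MA MB MC).
  replace f with (xa + xb + xc) in Hf |- * by lra.
  replace (xa + xb + xc) with ((xb + xc) / 2 + (xc + xa) / 2 + (xa + xb) / 2) in Hf |- * by field.
  assert (Ya : ya = - yb - yc) by lra.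
  set (Fx := (xb + xc) / 2 + (xc + xa) / 2 + (xa + xb) / 2) in *.
  match type of FI with ?L = ?R => transitivity L end.
  { subst ya. unfold Fx. field. }
  rewrite FI.
  replace ((yb + yc) / 2 + (yc + ya) / 2 + (ya + yb) / 2) with 0 by lra.
  replace (Fx ^ 2 + 0 ^ 2) with (Fx ^ 2) by ring.
  rewrite Hf.
  destruct Hs as [Hs|Hs]; subst s; ring.
Qed.

Lemma loc_dot (O u P Q R S : pt) : dot u u = 1 ->
  dot (vsub P Q) (vsub R S) =
  (lx O u P - lx O u Q) * (lx O u R - lx O u S) + (ly O u P - ly O u Q) * (ly O u R - ly O u S).
Proof.
  intro Hu. transitivity (dot (vsub P Q) (vsub R S) * dot u u).
  - rewrite Hu; ring.
  - destruct O, u, P, Q, R, S. unfold lx, ly, dot, vsub, perp; simpl. ring.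
Qed.

Lemma loc_cross (O u P Q R S : pt) : dot u u = 1 ->
  cross (vsub P Q) (vsub R S) =
  (lx O u P - lx O u Q) * (ly O u R - ly O u S) - (ly O u P - ly O u Q) * (lx O u R - lx O u S).
Proof.
  intro Hu. transitivity (cross (vsub P Q) (vsub R S) * dot u u).
  - rewrite Hu; ring.
  - destruct O, u, P, Q, R, S. unfold lx, ly, cross, dot, vsub, perp; simpl. ring.
Qed.

Lemma dot_self_nonneg (P : pt) : 0 <= dot P P.
Proof. destruct P; unfold dot; simpl; nra. Qed.

Lemma tang_loc (e : bool) (O u : pt) (a b : R) (P Q : pt) : dot u u = 1 ->
  tangent_line e O u a b P Q ->
  tang (sgn e) a b (lx O u P) (ly O u P) (lx O u Q) (ly O u Q).
Proof.
  intros Hu [Hne [X [[t Ht] [Hc Hg]]]]. split.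
  - intros [E1 E2]. apply Hne.
    assert (Z : dot (vsub P Q) (vsub P Q) = 0).
    { rewrite (loc_dot O u) by exact Hu. rewrite E1, E2. ring. }
    destruct P as [p1 p2], Q as [q1 q2]. unfold dot, vsub in Z; simpl in Z.
    clear - Z. assert (S1 := Rle_0_sqr (p1 - q1)); assert (S2 := Rle_0_sqr (p2 - q2)); unfold Rsqr in S1, S2.
    assert (Z1 : (p1 - q1) * (p1 - q1) = 0) by lra. assert (Z2 : (p2 - q2) * (p2 - q2) = 0) by lra.
    apply Rmult_integral in Z1; apply Rmult_integral in Z2. f_equal; lra.
  - exists t, (lx O u X), (ly O u X). repeat split.
    + subst X. destruct O, u, P, Q. unfold lx, dot, vsub, vadd, vscale; simpl. ring.
    + subst X. destruct O, u, P, Q. unfold ly, lx, dot, vsub, vadd, vscale, perp; simpl. ring.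
    + exact Hc.
    + rewrite <- Hg. f_equal.
      * f_equal. destruct O, u, P, Q. unfold lx, dot, vsub; simpl. ring.
      * f_equal. destruct O, u, P, Q. unfold ly, dot, vsub, perp; simpl. ring.
Qed.

Theorem corollary5p13 (e : bool) (O u : pt) (a b : R) (A B C F H : pt) :
  central_conic e O u a b ->
  nondegenerate A B C ->
  circumscribed e O u a b A B C ->
  is_focus e O u a b F ->
  is_circumcenter A B C F ->
  is_orthocenter A B C H ->
  pdist A H * pdist B H * pdist C H = 8 * a * b ^ 2.
Proof.
  intros [Ha [Hb [Hu Hab]]] Hnd [TAB [TBC TCA]] Hfoc [CAB CBC] [OA [OB OC]].
  set (f := lx O u F).
  assert (Fy : ly O u F = 0).
  { destruct Hfoc as [-> | ->]; destruct O, u; unfold ly, dot, vsub, vadd, vscale, perp in *; simpl in *; ring. }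
  assert (Hf : f ^ 2 = a ^ 2 - sgn e * b ^ 2).
  { assert (Fx : f = focal_c e a b \/ f = - focal_c e a b).
    { unfold f. destruct Hfoc as [-> | ->]; [left|right];
      destruct O, u; unfold lx, dot, vsub, vadd, vscale in *; simpl in *;
      [transitivity (focal_c e a b * (r1 * r1 + r2 * r2)); [ring | rewrite Hu; ring]
      |transitivity (- focal_c e a b * (r1 * r1 + r2 * r2)); [ring | rewrite Hu; ring]]. }
    assert (Cq : focal_c e a b ^ 2 = a ^ 2 - sgn e * b ^ 2).
    { unfold focal_c. rewrite pow2_sqrt; destruct e; simpl sgn.
      - ring. - ring. - specialize (Hab eq_refl). nra. - nra. }
    destruct Fx as [-> | ->]; [exact Cq | rewrite <- Cq; ring]. }
  assert (Hs : sgn e = 1 \/ sgn e = -1) by (destruct e; simpl; auto).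
  assert (sq : forall P Q : pt, pdist P Q = sqrt ((lx O u P - lx O u Q) ^ 2 + (ly O u P - ly O u Q) ^ 2)).
  { intros P Q. unfold pdist. rewrite (loc_dot O u) by exact Hu. f_equal; ring. }
  assert (eqd : forall P Q R S : pt, pdist P Q = pdist R S ->
     (lx O u P - lx O u Q) ^ 2 + (ly O u P - ly O u Q) ^ 2 =
     (lx O u R - lx O u S) ^ 2 + (ly O u R - ly O u S) ^ 2).
  { intros P Q R S E. rewrite !sq in E. apply sqrt_inj; auto; apply Rplus_le_le_0_compat; apply pow2_ge_0. }
  assert (K := core (sgn e) a b f (lx O u A) (ly O u A) (lx O u B) (ly O u B)
     (lx O u C) (ly O u C) (lx O u H) (ly O u H) Hs Ha Hb Hf
     (tang_loc e O u a b A B Hu TAB) (tang_loc e O u a b B C Hu TBC)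
     (tang_loc e O u a b C A Hu TCA)).
  unfold nondegenerate in Hnd. rewrite (loc_cross O u) in Hnd by exact Hu.
  specialize (K Hnd).
  apply eqd in CAB. apply eqd in CBC. rewrite Fy in CAB, CBC. fold f in CAB, CBC.
  specialize (K CAB CBC).
  rewrite (loc_dot O u) in OA, OB by exact Hu.
  specialize (K ltac:(lra) ltac:(lra)).
  rewrite !sq.
  assert (P2 : forall x y : R, 0 <= x ^ 2 + y ^ 2) by (intros; apply Rplus_le_le_0_compat; apply pow2_ge_0).
  rewrite <- sqrt_mult_alt by apply P2. rewrite <- sqrt_mult_alt by (apply Rmult_le_pos; apply P2).
  rewrite K.
  replace (64 * a ^ 2 * b ^ 4) with ((8 * a * b ^ 2) ^ 2) by ring.
  apply sqrt_pow2. nra.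
Qed.
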